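(* Let $(i,j,t,u,v)$ be an arbitrary permutation of $(1,2,3,4,5)$. The following monomials in $P_5$ are strictly inadmissible: (i) $x_i^{7}x_j^{9}x_t^{2}x_u^{15}x_v^{15}$, $x_i^{3}x_j^{7}x_t^{8}x_u^{15}x_v^{15}$, $x_i^{7}x_j^{3}x_t^{8}x_u^{15}x_v^{15}$, $x_i^{7}x_j^{8}x_t^{3}x_u^{15}x_v^{15}$, for $i<j<t$; (ii) $x_r^{15}\theta_{J_r}(w)$ for $1\le r\le5$ and $w$ one of $x_1^{7}x_2^{8}x_3^{7}x_4^{11}$, $x_1^{7}x_2^{9}x_3^{3}x_4^{14}$, $x_1^{7}x_2^{9}x_3^{6}x_4^{11}$, $x_1^{7}x_2^{9}x_3^{7}x_4^{10}$, $x_1^{7}x_2^{9}x_3^{14}x_4^{3}$, $x_1^{7}x_2^{11}x_3^{7}x_4^{8}$; (iii) $x_1^{7}x_2^{9}x_3^{7}x_4^{14}x_5^{11}$ and $x_1^{7}x_2^{9}x_3^{14}x_4^{7}x_5^{11}$.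
   Context: $P_k=\mathbb F_2[x_1,\dots,x_k]$, $\deg x_i=1$, with the standard action of the mod-2 Steenrod algebra $\mathcal A$. $\mathcal A_s$ is the sub-Hopf algebra generated by $Sq^i$, $0\le i\le2^s$, and $\mathcal A_s^+=\mathcal A^+\cap\mathcal A_s$. For a monomial $x$, $\nu_j(x)$ is the exponent of $x_j$, $\alpha_i(a)$ the $i$-th binary digit of $a$, $\omega(x)=(\omega_i(x))$ with $\omega_i(x)=\sum_j\alpha_{i-1}(\nu_j(x))$, $\sigma(x)=(\nu_1(x),\dots,\nu_k(x))$, both ordered left-lexicographically; for monomials of equal degree $u<v$ iff $\omega(u)<\omega(v)$, or $\omega(u)=\omega(v)$ and $\sigma(u)<\sigma(v)$. A monomial $u$ is strictly inadmissible if there exist monomials $v_1,\dots,v_r<u$ with $u+\sum_jv_j\in\mathcal A_{s-1}^+P_k$, where $s=\max\{i:\omega_i(u)>0\}$. For $1\le r\le5$, $J_r=(1,\dots,\hat r,\dots,5)$ and $\theta_{J_r}:P_4\to P_5$ is the algebra map sending $x_t$ to the variable indexed by the $t$-th entry of $J_r$. *)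

(* Defs.v *)
From HB Require Import structures.
From mathcomp Require Import all_boot all_order all_algebra all_fingroup.
From mathcomp Require Import mpoly.

Set Implicit Arguments.
Unset Strict Implicit.
Unset Printing Implicit Defensive.

Import GRing.Theory.
Local Open Scope ring_scope.

(* P_k = F_2[x_1,...,x_k]; variables indexed by 'I_k (x_1 is index 0). *)
Notation P k := {mpoly 'F_2[k]}.

(* Sq^i on the monomial x^m, via Sq^i(x^a) = C(a,i) x^(a+i) and the
   Cartan formula: Sq^i(x^m) = sum_{e, |e| = i} prod_j C(m_j,e_j) x^(m+e). *)
Definition sqm (k i : nat) (m : 'X_{1..k}) : P k :=
  \sum_(e : 'X_{1..k < i.+1} | mdeg e == i)
     ((\prod_(j < k) 'C(m j, e j))%:R : 'F_2) *: 'X_[m + e].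

Definition Sq (k i : nat) (p : P k) : P k :=
  \sum_(m <- msupp p) p@_m *: sqm i m.

(* p in A_t^+ P_k, where A_t is generated by Sq^i, 0 <= i <= 2^t:
   p is a finite sum of Sq^i(f) with 1 <= i <= 2^t. *)
Definition hitA (k t : nat) (p : P k) : Prop :=
  exists l : seq (nat * P k),
    all (fun c => 0 < c.1 <= 2 ^ t)%N l /\
    p = \sum_(c <- l) Sq c.1 c.2.

Definition alpha (i a : nat) : nat := odd (a %/ 2 ^ i).

Definition omega (k : nat) (x : 'X_{1..k}) (i : nat) : nat :=
  (\sum_(j < k) alpha i.-1 (x j))%N.

Definition omega_lt (k : nat) (u v : 'X_{1..k}) : Prop :=
  exists i, (0 < i)%N /\ (forall l, (0 < l < i)%N -> omega u l = omega v l)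
            /\ (omega u i < omega v i)%N.

Definition omega_eq (k : nat) (u v : 'X_{1..k}) : Prop :=
  forall i, (0 < i)%N -> omega u i = omega v i.

Definition sigma_lt (k : nat) (u v : 'X_{1..k}) : Prop :=
  exists j : 'I_k, (forall l : 'I_k, (l < j)%N -> u l = v l) /\ (u j < v j)%N.

Definition mono_lt (k : nat) (u v : 'X_{1..k}) : Prop :=
  mdeg u = mdeg v /\ (omega_lt u v \/ (omega_eq u v /\ sigma_lt u v)).

(* s(u) = max{ i : omega_i(u) > 0 } (bits of exponents are at positions
   < deg u + 1, so i ranges over 1..deg u + 1). *)
Definition s_of (k : nat) (u : 'X_{1..k}) : nat :=
  (\max_(i < (mdeg u).+2 | (0 < i)%N && (0 < omega u i)%N) i)%N.

Definition strictly_inadmissible (k : nat) (u : 'X_{1..k}) : Prop :=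
  exists vs : seq 'X_{1..k},
    (forall v, v \in vs -> mono_lt v u) /\
    hitA (s_of u).-1 ('X_[u] + \sum_(v <- vs) 'X_[v]).

(* the monomial x_{p(0)}^{a0} x_{p(1)}^{a1} ... x_{p(4)}^{a4} in P_5 *)
Definition pmono (p : 'S_5) (a : seq nat) : 'X_{1..5} :=
  [multinom nth 0%N a ((p^-1)%g l) | l < 5].

Definition mono4 (a : seq nat) : 'X_{1..4} := [multinom nth 0%N a l | l < 4].

(* x_r^15 * theta_{J_r}(w): theta_{J_r} sends x_t to x_{J_r(t)}, where J_r
   lists {1..5} \ {r} increasingly, i.e. J_r(t) = lift r t. *)
Definition xr15_theta (r : 'I_5) (w : 'X_{1..4}) : 'X_{1..5} :=
  [multinom (if unlift r l is Some t then w t else 15%N) | l < 5].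

Definition mono5 (a : seq nat) : 'X_{1..5} := [multinom nth 0%N a l | l < 5].

(* Main.v *)
Require Import Defs.
From HB Require Import structures.
From mathcomp Require Import all_boot all_order all_algebra all_fingroup.
From mathcomp Require Import mpoly.
From mathcomp Require Import zify.
Set Implicit Arguments. Unset Strict Implicit. Unset Printing Implicit Defensive.
Import GRing.Theory.

Definition tomn (s : seq nat) : 'X_{1..5} := [multinom nth 0%N s i | i < 5].
Lemma tomnE s (j : 'I_5) : tomn s j = nth 0%N s j. Proof. by rewrite mnmE. Qed.

Definition addl (a b : seq nat) : seq nat :=
  [seq (nth 0 a j + nth 0 b j)%N | j <- iota 0 5].
Lemma tomn_add a b : tomn (addl a b) = (tomn a + tomn b)%MM.
Proof.
apply/mnmP=> j; rewrite mnmDE !tomnE (nth_map 0%N) ?size_iota //.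
by rewrite nth_iota.
Qed.

Definition pstep (r : seq bool) : seq bool :=
  mkseq (fun k => if k is k'.+1 then nth false r k (+) nth false r k' else true) (size r).+1.
Arguments pstep : simpl never.
Fixpoint prow (n : nat) : seq bool :=
  if n is n'.+1 then pstep (prow n') else [:: true].

Lemma size_pstep r : size (pstep r) = (size r).+1.
Proof. exact: size_mkseq. Qed.
Lemma nth_pstep r k : k < (size r).+1 ->
  nth false (pstep r) k = if k is k'.+1 then nth false r k (+) nth false r k' else true.
Proof. exact: nth_mkseq. Qed.

Lemma size_prow n : size (prow n) = n.+1.
Proof. by elim: n => [|n IH] //; rewrite size_pstep IH. Qed.

Lemma prowE n k : nth false (prow n) k = odd 'C(n, k).
Proof.
elim: n k => [|n IH] [|k] //; first by rewrite /= nth_nil.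
have [lt|ge] := ltnP k.+1 n.+2.
  by rewrite nth_pstep ?size_prow // !IH binS oddD addbC.
by rewrite nth_default ?size_pstep ?size_prow // bin_small.
Qed.

Definition binb a b := nth false (prow a) b.
Definition oddc (m e : seq nat) :=
  all (fun j => binb (nth 0 m j) (nth 0 e j)) (iota 0 5).

Fixpoint comps (k i : nat) : seq (seq nat) :=
  if k is k'.+1 then [seq a :: s | a <- iota 0 i.+1, s <- comps k' (i - a)]
  else if i == 0 then [:: [::]] else [::].

Lemma mem_comps k i s : (s \in comps k i) = (size s == k) && (sumn s == i).
Proof.
elim: k i s => [|k IH] i s; first by case: i; case: s.
have -> : comps k.+1 i = [seq a :: t | a <- iota 0 i.+1, t <- comps k (i - a)] by [].
apply/allpairsPdep/idP.
  move=> [a [t [ha ht ->]]]; move: ha ht; rewrite IH mem_iota.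
  move=> ha /andP[/eqP hs /eqP ht] /=; rewrite hs ht eqxx /=; apply/eqP.
  lia.
case: s => [|b t] //= /andP[/eqP hs /eqP hsum]; exists b, t; split => //.
  rewrite -[0 :: _]/(iota 0 i.+1) mem_iota; lia.
by rewrite IH; case: hs => ->; rewrite eqxx -hsum addKn eqxx.
Qed.

Lemma uniq_comps k i : uniq (comps k i).
Proof.
elim: k i => [|k IH] i; first by case: i.
apply: allpairs_uniq_dep; first exact: iota_uniq.
  by move=> a _; apply: IH.
by move=> [a s] [b t] _ _ /= [-> ->].
Qed.

Section Ring.
Local Open Scope ring_scope.
Lemma F2_nat n : (n%:R : 'F_2) = (odd n)%:R :> 'F_2.
Proof. by rewrite -(Fp_nat_mod (p:=2)) // modn2. Qed.

Lemma coefF2 m e :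
  ((\prod_(j < 5) 'C(tomn m j, tomn e j))%:R : 'F_2) = (oddc m e)%:R :> 'F_2.
Proof.
rewrite F2_nat !big_ord_recr big_ord0 /= !oddM !tomnE /oddc /= /binb !prowE.
by rewrite !andbA andbT.
Qed.

End Ring.

Definition ofmn (x : 'X_{1..5}) : seq nat := [seq x (inord j) | j <- iota 0 5].
Lemma size_ofmn x : size (ofmn x) = 5. Proof. by rewrite size_map size_iota. Qed.
Lemma ofmnK x : tomn (ofmn x) = x.
Proof.
apply/mnmP=> j; rewrite tomnE (nth_map 0) ?size_iota // nth_iota //.
by rewrite add0n inord_val.
Qed.

Lemma tomn_inj a b : size a = 5 -> size b = 5 -> tomn a = tomn b -> a = b.
Proof.
move=> ha hb /mnmP e; apply: (@eq_from_nth _ 0) => [|j]; first by rewrite ha hb.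
rewrite ha => hj; have := e (Ordinal hj); by rewrite !tomnE.
Qed.

Lemma mdeg_tomn c : size c = 5 -> mdeg (tomn c) = sumn c.
Proof.
case: c => [|a0 [|a1 [|a2 [|a3 [|a4 [|]]]]]] //= _.
by rewrite mdegE !big_ord_recr big_ord0 /= !tomnE /= !addnA add0n addn0.
Qed.

Lemma mem_mcomps i (x : 'X_{1..5}) : (x \in map tomn (comps 5 i)) = (mdeg x == i).
Proof.
apply/mapP/idP.
  move=> [c hc ->]; move: hc; rewrite mem_comps => /andP[/eqP hs hsum].
  by rewrite mdeg_tomn.
move=> hx; exists (ofmn x); last by rewrite ofmnK.
by rewrite mem_comps size_ofmn eqxx -mdeg_tomn ?size_ofmn // ofmnK.
Qed.

Lemma uniq_mcomps i : uniq (map tomn (comps 5 i)).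
Proof.
rewrite map_inj_in_uniq ?uniq_comps // => a b.
rewrite !mem_comps => /andP[/eqP ha _] /andP[/eqP hb _]; exact: tomn_inj.
Qed.

Section Ring2.
Local Open Scope ring_scope.

Lemma sqm_list i ms : sqm i (tomn ms) =
  \sum_(c <- comps 5 i | oddc ms c) 'X_[tomn (addl ms c)].
Proof.
rewrite /sqm -big_filter.
set F := fun x : 'X_{1..5} =>
  ((\prod_(j < 5) 'C(tomn ms j, x j))%:R : 'F_2) *: ('X_[tomn ms + x] : P 5).
rewrite (eq_bigr (fun e => F (bmnm e))) //.
rewrite -(big_map (@bmnm 5 i.+1) xpredT F).
rewrite (perm_big (map tomn (comps 5 i))); last first.
  apply: uniq_perm.
  - rewrite map_inj_uniq ?filter_uniq ?index_enum_uniq //; exact: val_inj.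
  - exact: uniq_mcomps.
  move=> x; rewrite mem_mcomps; apply/mapP/idP.
    by move=> [e]; rewrite mem_filter => /andP[he _] ->.
  move=> hx; have hb : (mdeg x < i.+1)%N by rewrite (eqP hx).
  exists (BMultinom hb) => //; by rewrite mem_filter /= hx mem_index_enum.
rewrite (big_map tomn xpredT F) [RHS]big_mkcond /=; apply: eq_bigr => c _.
rewrite /F coefF2 tomn_add; by case: (oddc ms c); rewrite ?scale1r ?scale0r.
Qed.

Lemma Sq_X i m : Sq i ('X_[m] : P 5) = sqm i m.
Proof. by rewrite /Sq msuppX big_seq1 mcoeffX eqxx scale1r. Qed.

End Ring2.

Definition Rl (W : seq (nat * seq nat)) : seq (seq nat) :=
  flatten [seq [seq addl im.2 c | c <- comps 5 im.1 & oddc im.2 c] | im <- W].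

Section Ring3.
Local Open Scope ring_scope.

Lemma sumSq W :
  \sum_(c <- [seq (im.1, ('X_[tomn im.2] : P 5)) | im <- W]) Sq c.1 c.2
  = \sum_(x <- Rl W) ('X_[tomn x] : P 5).
Proof.
rewrite big_map /Rl big_flatten /= big_map; apply: eq_bigr => im _.
by rewrite Sq_X sqm_list big_map big_filter.
Qed.

Lemma sum_natr_count (T : Type) (b : pred T) (L : seq T) :
  \sum_(x <- L) ((b x)%:R : 'F_2) = (count b L)%:R.
Proof. elim: L => [|x L IH]; by rewrite ?big_nil ?big_cons ?IH ?natrD. Qed.

Lemma parity (L1 L2 : seq (seq nat)) :
  all (fun x => size x == 5)%N (L1 ++ L2) ->
  all (fun x => odd (count_mem x L1) == odd (count_mem x L2)) (L1 ++ L2) ->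
  \sum_(x <- L1) ('X_[tomn x] : P 5) = \sum_(x <- L2) 'X_[tomn x].
Proof.
move=> /allP hs /allP hp; apply/mpolyP => n; rewrite !raddf_sum /=.
rewrite (eq_bigr (fun x => ((tomn x == n) : nat)%:R)); last by move=> x _; rewrite mcoeffX.
rewrite [RHS](eq_bigr (fun x => ((tomn x == n) : nat)%:R)); last by move=> x _; rewrite mcoeffX.
rewrite !sum_natr_count [LHS]F2_nat [RHS]F2_nat.
case: (boolP (has (fun x => tomn x == n) (L1 ++ L2))).
  move=> /hasP [x0 hx0 /eqP <-].
  have E : forall L, {subset L <= L1 ++ L2} ->
      count (fun x => tomn x == tomn x0) L = count_mem x0 L.
    move=> L hL; apply: eq_in_count => x hx /=.
    apply/eqP/eqP => [|-> //]; apply: tomn_inj; apply/eqP; apply: hs => //.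
    exact: hL.
  rewrite !E; first by rewrite (eqP (hp _ hx0)).
    by move=> x hx; rewrite mem_cat hx orbT.
  by move=> x hx; rewrite mem_cat hx.
move=> /hasPn h.
have E : forall L, {subset L <= L1 ++ L2} -> count (fun x => tomn x == n) L = 0%N.
  move=> L hL; rewrite (eq_in_count (a2 := pred0)) ?count_pred0 // => x hx.
  by apply/negbTE/h/hL.
rewrite !E //; by move=> x hx; rewrite mem_cat hx ?orbT.
Qed.

End Ring3.

Definition oms (s : seq nat) (i : nat) : nat := sumn [seq alpha i.-1 x | x <- s].

Lemma omega_tomn s i : size s = 5 -> omega (tomn s) i = oms s i.
Proof.
case: s => [|a0 [|a1 [|a2 [|a3 [|a4 [|]]]]]] //= _.
by rewrite /omega !big_ord_recr big_ord0 /= !tomnE /= /oms /=; lia.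
Qed.

Lemma oms0 s i : all (fun x => x < 2 ^ i.-1) s -> oms s i = 0.
Proof.
elim: s => [|x s IH] //= /andP[hx hs].
by rewrite /oms /= -/(oms s i) IH // /alpha divn_small.
Qed.

Definition omlt (v u : seq nat) :=
  has (fun i => (oms v i < oms u i) && all (fun l => oms v l == oms u l) (iota 1 i.-1))
      (iota 1 7).
Definition omeq (v u : seq nat) :=
  all (fun i => oms v i == oms u i) (iota 1 7) && all (fun x => x < 64) (v ++ u).
Definition siglt (v u : seq nat) :=
  has (fun j => (nth 0 v j < nth 0 u j) && all (fun l => nth 0 v l == nth 0 u l) (iota 0 j))
      (iota 0 5).
Definition ltb (v u : seq nat) :=
  [&& size v == 5, size u == 5, sumn v == sumn u & omlt v u || omeq v u && siglt v u].

Lemma ltbP v u : ltb v u -> mono_lt (tomn v) (tomn u).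
Proof.
case/and4P=> /eqP hv /eqP hu /eqP hs h; split.
  by rewrite !mdeg_tomn.
case/orP: h => [|/andP[h1 h2]].
  move=> /hasP[i]; rewrite mem_iota => /andP[hi1 hi2] /andP[hlt /allP hall].
  left; exists i; split => //; split; last by rewrite !omega_tomn.
  move=> l /andP[hl1 hl2]; rewrite !omega_tomn //; apply/eqP/hall.
  rewrite mem_iota hl1 /=; lia.
right; split.
  move=> i hi; rewrite !omega_tomn //.
  case/andP: h1 => /allP ha /allP hb.
  have [hi7|hi7] := leqP i 7.
    by apply/eqP/ha; rewrite mem_iota hi /=; lia.
  have hb' : forall x, x \in v ++ u -> x < 2 ^ i.-1.
    move=> x /hb hx; apply: (leq_trans hx).
    rewrite -[64]/(2 ^ 6) leq_exp2l //; lia.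
  rewrite !oms0 //; apply/allP => x hx; apply: hb'; by rewrite mem_cat hx ?orbT.
move: h2 => /hasP[j]; rewrite mem_iota /= => hj /andP[hlt /allP hall].
have hj5 : j < 5 by [].
exists (Ordinal hj5); split; last by rewrite !tomnE.
move=> l hl; rewrite !tomnE; apply/eqP/hall; rewrite mem_iota /=; exact: hl.
Qed.

Lemma s_of4 u : size u = 5 -> all (fun x => x < 16) u -> 0 < oms u 4 ->
  3 <= sumn u -> s_of (tomn u) = 4.
Proof.
move=> hs hall hpos hsum; rewrite /s_of; apply/eqP; rewrite eqn_leq; apply/andP; split.
  apply/bigmax_leqP => i /andP[hi0 hio]; rewrite leqNgt; apply/negP => hi.
  move: hio; rewrite omega_tomn // oms0 //; apply/allP => x hx.
  apply: (leq_trans (allP hall x hx)).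
  rewrite -[16]/(2 ^ 4) leq_exp2l //; lia.
have h4 : 4 < (mdeg (tomn u)).+2 by rewrite mdeg_tomn //; lia.
apply: (@leq_bigmax_cond _ _ (fun i : 'I__ => val i) (Ordinal h4)).
by rewrite /= omega_tomn.
Qed.

Definition vsOf (u : seq nat) W :=
  let R := Rl W in undup [seq x <- R | odd (count_mem x R) && (x != u)].

Definition check (u : seq nat) (W : seq (nat * seq nat)) : bool :=
  let R := Rl W in let vs := vsOf u W in
  [&& size u == 5, all (fun x => x < 16) u, 0 < oms u 4, 3 <= sumn u,
      all (fun im => 0 < im.1 <= 8) W,
      all (fun x => size x == 5) ((u :: vs) ++ R),
      all (fun x => odd (count_mem x (u :: vs)) == odd (count_mem x R)) ((u :: vs) ++ R)
    & all (fun v => ltb v u) vs].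

Lemma checkP u W : check u W -> strictly_inadmissible (tomn u).
Proof.
case/and5P=> /eqP hs h16 hpos hsum /and4P[hW hsz hpar hlt].
exists (map tomn (vsOf u W)); split.
  move=> v /mapP[x hx ->]; apply: ltbP; exact: (allP hlt).
rewrite s_of4 //=.
exists [seq (im.1, ('X_[tomn im.2] : P 5)) | im <- W]; split.
  rewrite all_map; apply/allP => im him /=; exact: (allP hW).
rewrite sumSq -(parity hsz hpar) big_cons big_map //.
Qed.

Lemma xr15E (r : 'I_5) w : size w = 4 ->
  xr15_theta r (mono4 w) = tomn (take r w ++ 15 :: drop r w).
Proof.
move=> hw; apply/mnmP => l; rewrite mnmE tomnE.
have hr : r <= size w by rewrite hw -ltnS ltn_ord.
case: unliftP => [t ->|->]; last by rewrite nth_cat size_takel // ltnn subnn.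
rewrite /mono4 mnmE /= /bump nth_cat size_takel //.
case: (leqP r t) => h.
  rewrite add1n ltnNge (leq_trans h) //= subSn //= nth_drop subnKC //.
rewrite add0n h nth_take //.
Qed.

Lemma pmonoE (p : 'S_5) a s :
  (forall k, k < 5 -> nth 0 s (p (inord k)) = nth 0 a k) -> pmono p a = tomn s.
Proof.
move=> H; apply/mnmP => l; rewrite mnmE tomnE.
have := H _ (ltn_ord ((p^-1)%g l)); rewrite inord_val => <-.
by rewrite permKV.
Qed.
Definition tbl : seq (seq nat * seq (nat * seq nat)) := [::
  ([:: 3; 7; 8; 15; 15],
   [:: (1, [:: 3; 7; 7; 15; 15]); (2, [:: 2; 7; 7; 15; 15]); (4, [:: 3; 4; 7; 15; 15])]);
  ([:: 3; 7; 15; 8; 15],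
   [:: (1, [:: 3; 7; 15; 7; 15]); (2, [:: 2; 7; 15; 7; 15]); (4, [:: 3; 4; 15; 7; 15])]);
  ([:: 3; 7; 15; 15; 8],
   [:: (1, [:: 3; 7; 15; 15; 7]); (2, [:: 2; 7; 15; 15; 7]); (4, [:: 3; 4; 15; 15; 7])]);
  ([:: 3; 15; 7; 8; 15],
   [:: (1, [:: 3; 15; 7; 7; 15]); (2, [:: 2; 15; 7; 7; 15]); (4, [:: 3; 15; 4; 7; 15])]);
  ([:: 3; 15; 7; 15; 8],
   [:: (1, [:: 3; 15; 7; 15; 7]); (2, [:: 2; 15; 7; 15; 7]); (4, [:: 3; 15; 4; 15; 7])]);
  ([:: 3; 15; 15; 7; 8],
   [:: (1, [:: 3; 15; 15; 7; 7]); (2, [:: 2; 15; 15; 7; 7]); (4, [:: 3; 15; 15; 4; 7])]);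
  ([:: 7; 3; 8; 15; 15],
   [:: (1, [:: 5; 5; 7; 15; 15]); (1, [:: 7; 3; 7; 15; 15]); (2, [:: 3; 6; 7; 15; 15]); (2, [:: 6; 3; 7; 15; 15]); (2, [:: 7; 2; 7; 15; 15]); (4, [:: 5; 2; 7; 15; 15])]);
  ([:: 7; 3; 15; 8; 15],
   [:: (1, [:: 5; 5; 15; 7; 15]); (1, [:: 7; 3; 15; 7; 15]); (2, [:: 3; 6; 15; 7; 15]); (2, [:: 6; 3; 15; 7; 15]); (2, [:: 7; 2; 15; 7; 15]); (4, [:: 5; 2; 15; 7; 15])]);
  ([:: 7; 3; 15; 15; 8],
   [:: (1, [:: 5; 5; 15; 15; 7]); (1, [:: 7; 3; 15; 15; 7]); (2, [:: 3; 6; 15; 15; 7]); (2, [:: 6; 3; 15; 15; 7]); (2, [:: 7; 2; 15; 15; 7]); (4, [:: 5; 2; 15; 15; 7])]);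
  ([:: 7; 8; 3; 15; 15],
   [:: (1, [:: 7; 5; 5; 15; 15]); (2, [:: 7; 3; 6; 15; 15]); (2, [:: 7; 6; 3; 15; 15]); (4, [:: 5; 3; 6; 15; 15]); (4, [:: 5; 6; 3; 15; 15])]);
  ([:: 7; 8; 7; 11; 15],
   [:: (1, [:: 7; 5; 7; 13; 15]); (2, [:: 7; 3; 7; 14; 15]); (2, [:: 7; 6; 7; 11; 15]); (4, [:: 5; 3; 7; 14; 15]); (4, [:: 5; 6; 7; 11; 15])]);
  ([:: 7; 8; 7; 15; 11],
   [:: (1, [:: 7; 5; 7; 15; 13]); (2, [:: 7; 3; 7; 15; 14]); (2, [:: 7; 6; 7; 15; 11]); (4, [:: 5; 3; 7; 15; 14]); (4, [:: 5; 6; 7; 15; 11])]);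
  ([:: 7; 8; 15; 3; 15],
   [:: (1, [:: 7; 5; 15; 5; 15]); (2, [:: 7; 3; 15; 6; 15]); (2, [:: 7; 6; 15; 3; 15]); (4, [:: 5; 3; 15; 6; 15]); (4, [:: 5; 6; 15; 3; 15])]);
  ([:: 7; 8; 15; 7; 11],
   [:: (1, [:: 7; 5; 15; 7; 13]); (2, [:: 7; 3; 15; 7; 14]); (2, [:: 7; 6; 15; 7; 11]); (4, [:: 5; 3; 15; 7; 14]); (4, [:: 5; 6; 15; 7; 11])]);
  ([:: 7; 8; 15; 15; 3],
   [:: (1, [:: 7; 5; 15; 15; 5]); (2, [:: 7; 3; 15; 15; 6]); (2, [:: 7; 6; 15; 15; 3]); (4, [:: 5; 3; 15; 15; 6]); (4, [:: 5; 6; 15; 15; 3])]);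
  ([:: 7; 9; 2; 15; 15],
   [:: (1, [:: 5; 7; 5; 15; 15]); (1, [:: 7; 7; 3; 15; 15]); (2, [:: 3; 7; 6; 15; 15]); (2, [:: 6; 7; 3; 15; 15]); (2, [:: 7; 7; 2; 15; 15]); (4, [:: 5; 7; 2; 15; 15])]);
  ([:: 7; 9; 3; 14; 15],
   [:: (1, [:: 5; 7; 13; 7; 15]); (1, [:: 7; 7; 5; 13; 15]); (1, [:: 7; 7; 11; 7; 15]); (1, [:: 11; 3; 5; 13; 15]); (2, [:: 3; 7; 14; 7; 15]); (2, [:: 6; 7; 11; 7; 15]); (2, [:: 7; 7; 3; 14; 15]); (2, [:: 7; 7; 6; 11; 15]); (2, [:: 7; 7; 10; 7; 15]); (2, [:: 11; 3; 6; 11; 15]); (2, [:: 11; 3; 10; 7; 15]); (4, [:: 5; 7; 3; 14; 15]); (4, [:: 5; 7; 6; 11; 15]); (4, [:: 5; 7; 10; 7; 15]); (4, [:: 7; 3; 5; 14; 15]); (4, [:: 7; 3; 12; 7; 15]); (4, [:: 7; 5; 6; 11; 15]); (4, [:: 7; 5; 10; 7; 15]); (4, [:: 13; 3; 6; 7; 15])]);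
  ([:: 7; 9; 3; 15; 14],
   [:: (1, [:: 5; 7; 13; 15; 7]); (1, [:: 7; 7; 5; 15; 13]); (1, [:: 7; 7; 11; 15; 7]); (1, [:: 11; 3; 5; 15; 13]); (2, [:: 3; 7; 14; 15; 7]); (2, [:: 6; 7; 11; 15; 7]); (2, [:: 7; 7; 3; 15; 14]); (2, [:: 7; 7; 6; 15; 11]); (2, [:: 7; 7; 10; 15; 7]); (2, [:: 11; 3; 6; 15; 11]); (2, [:: 11; 3; 10; 15; 7]); (4, [:: 5; 7; 3; 15; 14]); (4, [:: 5; 7; 6; 15; 11]); (4, [:: 5; 7; 10; 15; 7]); (4, [:: 7; 3; 5; 15; 14]); (4, [:: 7; 3; 12; 15; 7]); (4, [:: 7; 5; 6; 15; 11]); (4, [:: 7; 5; 10; 15; 7]); (4, [:: 13; 3; 6; 15; 7])]);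
  ([:: 7; 9; 6; 11; 15],
   [:: (1, [:: 7; 7; 5; 13; 15]); (2, [:: 7; 7; 3; 14; 15]); (2, [:: 7; 7; 6; 11; 15]); (4, [:: 5; 7; 3; 14; 15]); (4, [:: 5; 7; 6; 11; 15])]);
  ([:: 7; 9; 6; 15; 11],
   [:: (1, [:: 7; 7; 5; 15; 13]); (2, [:: 7; 7; 3; 15; 14]); (2, [:: 7; 7; 6; 15; 11]); (4, [:: 5; 7; 3; 15; 14]); (4, [:: 5; 7; 6; 15; 11])]);
  ([:: 7; 9; 7; 10; 15],
   [:: (1, [:: 5; 7; 7; 13; 15]); (1, [:: 7; 7; 7; 11; 15]); (2, [:: 3; 7; 7; 14; 15]); (2, [:: 6; 7; 7; 11; 15]); (2, [:: 7; 7; 7; 10; 15]); (4, [:: 5; 7; 7; 10; 15])]);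
  ([:: 7; 9; 7; 14; 11],
   [:: (1, [:: 7; 7; 7; 13; 13]); (2, [:: 7; 7; 7; 11; 14]); (2, [:: 7; 7; 7; 14; 11]); (4, [:: 5; 7; 7; 11; 14]); (4, [:: 5; 7; 7; 14; 11])]);
  ([:: 7; 9; 7; 15; 10],
   [:: (1, [:: 5; 7; 7; 15; 13]); (1, [:: 7; 7; 7; 15; 11]); (2, [:: 3; 7; 7; 15; 14]); (2, [:: 6; 7; 7; 15; 11]); (2, [:: 7; 7; 7; 15; 10]); (4, [:: 5; 7; 7; 15; 10])]);
  ([:: 7; 9; 14; 3; 15],
   [:: (1, [:: 7; 7; 13; 5; 15]); (2, [:: 7; 7; 11; 6; 15]); (2, [:: 7; 7; 14; 3; 15]); (4, [:: 5; 7; 11; 6; 15]); (4, [:: 5; 7; 14; 3; 15])]);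
  ([:: 7; 9; 14; 7; 11],
   [:: (1, [:: 7; 7; 13; 7; 13]); (2, [:: 7; 7; 11; 7; 14]); (2, [:: 7; 7; 14; 7; 11]); (4, [:: 5; 7; 11; 7; 14]); (4, [:: 5; 7; 14; 7; 11])]);
  ([:: 7; 9; 14; 15; 3],
   [:: (1, [:: 7; 7; 13; 15; 5]); (2, [:: 7; 7; 11; 15; 6]); (2, [:: 7; 7; 14; 15; 3]); (4, [:: 5; 7; 11; 15; 6]); (4, [:: 5; 7; 14; 15; 3])]);
  ([:: 7; 9; 15; 2; 15],
   [:: (1, [:: 5; 7; 15; 5; 15]); (1, [:: 7; 7; 15; 3; 15]); (2, [:: 3; 7; 15; 6; 15]); (2, [:: 6; 7; 15; 3; 15]); (2, [:: 7; 7; 15; 2; 15]); (4, [:: 5; 7; 15; 2; 15])]);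
  ([:: 7; 9; 15; 3; 14],
   [:: (1, [:: 5; 7; 15; 13; 7]); (1, [:: 7; 7; 15; 5; 13]); (1, [:: 7; 7; 15; 11; 7]); (1, [:: 11; 3; 15; 5; 13]); (2, [:: 3; 7; 15; 14; 7]); (2, [:: 6; 7; 15; 11; 7]); (2, [:: 7; 7; 15; 3; 14]); (2, [:: 7; 7; 15; 6; 11]); (2, [:: 7; 7; 15; 10; 7]); (2, [:: 11; 3; 15; 6; 11]); (2, [:: 11; 3; 15; 10; 7]); (4, [:: 5; 7; 15; 3; 14]); (4, [:: 5; 7; 15; 6; 11]); (4, [:: 5; 7; 15; 10; 7]); (4, [:: 7; 3; 15; 5; 14]); (4, [:: 7; 3; 15; 12; 7]); (4, [:: 7; 5; 15; 6; 11]); (4, [:: 7; 5; 15; 10; 7]); (4, [:: 13; 3; 15; 6; 7])]);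
  ([:: 7; 9; 15; 6; 11],
   [:: (1, [:: 7; 7; 15; 5; 13]); (2, [:: 7; 7; 15; 3; 14]); (2, [:: 7; 7; 15; 6; 11]); (4, [:: 5; 7; 15; 3; 14]); (4, [:: 5; 7; 15; 6; 11])]);
  ([:: 7; 9; 15; 7; 10],
   [:: (1, [:: 5; 7; 15; 7; 13]); (1, [:: 7; 7; 15; 7; 11]); (2, [:: 3; 7; 15; 7; 14]); (2, [:: 6; 7; 15; 7; 11]); (2, [:: 7; 7; 15; 7; 10]); (4, [:: 5; 7; 15; 7; 10])]);
  ([:: 7; 9; 15; 14; 3],
   [:: (1, [:: 7; 7; 15; 13; 5]); (2, [:: 7; 7; 15; 11; 6]); (2, [:: 7; 7; 15; 14; 3]); (4, [:: 5; 7; 15; 11; 6]); (4, [:: 5; 7; 15; 14; 3])]);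
  ([:: 7; 9; 15; 15; 2],
   [:: (1, [:: 5; 7; 15; 15; 5]); (1, [:: 7; 7; 15; 15; 3]); (2, [:: 3; 7; 15; 15; 6]); (2, [:: 6; 7; 15; 15; 3]); (2, [:: 7; 7; 15; 15; 2]); (4, [:: 5; 7; 15; 15; 2])]);
  ([:: 7; 11; 7; 8; 15],
   [:: (1, [:: 5; 13; 7; 7; 15]); (1, [:: 7; 11; 7; 7; 15]); (1, [:: 7; 13; 3; 9; 15]); (1, [:: 7; 13; 5; 7; 15]); (2, [:: 3; 14; 7; 7; 15]); (2, [:: 6; 11; 7; 7; 15]); (2, [:: 7; 10; 7; 7; 15]); (2, [:: 7; 11; 3; 10; 15]); (2, [:: 7; 11; 6; 7; 15]); (2, [:: 7; 14; 3; 7; 15]); (4, [:: 5; 10; 7; 7; 15]); (4, [:: 5; 11; 6; 7; 15]); (4, [:: 5; 14; 3; 7; 15])]);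
  ([:: 7; 11; 7; 15; 8],
   [:: (1, [:: 5; 13; 7; 15; 7]); (1, [:: 7; 11; 7; 15; 7]); (1, [:: 7; 13; 3; 15; 9]); (1, [:: 7; 13; 5; 15; 7]); (2, [:: 3; 14; 7; 15; 7]); (2, [:: 6; 11; 7; 15; 7]); (2, [:: 7; 10; 7; 15; 7]); (2, [:: 7; 11; 3; 15; 10]); (2, [:: 7; 11; 6; 15; 7]); (2, [:: 7; 14; 3; 15; 7]); (4, [:: 5; 10; 7; 15; 7]); (4, [:: 5; 11; 6; 15; 7]); (4, [:: 5; 14; 3; 15; 7])]);
  ([:: 7; 11; 15; 7; 8],
   [:: (1, [:: 5; 13; 15; 7; 7]); (1, [:: 7; 11; 15; 7; 7]); (1, [:: 7; 13; 15; 3; 9]); (1, [:: 7; 13; 15; 5; 7]); (2, [:: 3; 14; 15; 7; 7]); (2, [:: 6; 11; 15; 7; 7]); (2, [:: 7; 10; 15; 7; 7]); (2, [:: 7; 11; 15; 3; 10]); (2, [:: 7; 11; 15; 6; 7]); (2, [:: 7; 14; 15; 3; 7]); (4, [:: 5; 10; 15; 7; 7]); (4, [:: 5; 11; 15; 6; 7]); (4, [:: 5; 14; 15; 3; 7])]);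
  ([:: 7; 15; 3; 8; 15],
   [:: (1, [:: 5; 15; 5; 7; 15]); (1, [:: 7; 15; 3; 7; 15]); (2, [:: 3; 15; 6; 7; 15]); (2, [:: 6; 15; 3; 7; 15]); (2, [:: 7; 15; 2; 7; 15]); (4, [:: 5; 15; 2; 7; 15])]);
  ([:: 7; 15; 3; 15; 8],
   [:: (1, [:: 5; 15; 5; 15; 7]); (1, [:: 7; 15; 3; 15; 7]); (2, [:: 3; 15; 6; 15; 7]); (2, [:: 6; 15; 3; 15; 7]); (2, [:: 7; 15; 2; 15; 7]); (4, [:: 5; 15; 2; 15; 7])]);
  ([:: 7; 15; 8; 3; 15],
   [:: (1, [:: 7; 15; 5; 5; 15]); (2, [:: 7; 15; 3; 6; 15]); (2, [:: 7; 15; 6; 3; 15]); (4, [:: 5; 15; 3; 6; 15]); (4, [:: 5; 15; 6; 3; 15])]);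
  ([:: 7; 15; 8; 7; 11],
   [:: (1, [:: 7; 15; 5; 7; 13]); (2, [:: 7; 15; 3; 7; 14]); (2, [:: 7; 15; 6; 7; 11]); (4, [:: 5; 15; 3; 7; 14]); (4, [:: 5; 15; 6; 7; 11])]);
  ([:: 7; 15; 8; 15; 3],
   [:: (1, [:: 7; 15; 5; 15; 5]); (2, [:: 7; 15; 3; 15; 6]); (2, [:: 7; 15; 6; 15; 3]); (4, [:: 5; 15; 3; 15; 6]); (4, [:: 5; 15; 6; 15; 3])]);
  ([:: 7; 15; 9; 2; 15],
   [:: (1, [:: 5; 15; 7; 5; 15]); (1, [:: 7; 15; 7; 3; 15]); (2, [:: 3; 15; 7; 6; 15]); (2, [:: 6; 15; 7; 3; 15]); (2, [:: 7; 15; 7; 2; 15]); (4, [:: 5; 15; 7; 2; 15])]);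
  ([:: 7; 15; 9; 3; 14],
   [:: (1, [:: 5; 15; 7; 13; 7]); (1, [:: 7; 15; 7; 5; 13]); (1, [:: 7; 15; 7; 11; 7]); (1, [:: 11; 15; 3; 5; 13]); (2, [:: 3; 15; 7; 14; 7]); (2, [:: 6; 15; 7; 11; 7]); (2, [:: 7; 15; 7; 3; 14]); (2, [:: 7; 15; 7; 6; 11]); (2, [:: 7; 15; 7; 10; 7]); (2, [:: 11; 15; 3; 6; 11]); (2, [:: 11; 15; 3; 10; 7]); (4, [:: 5; 15; 7; 3; 14]); (4, [:: 5; 15; 7; 6; 11]); (4, [:: 5; 15; 7; 10; 7]); (4, [:: 7; 15; 3; 5; 14]); (4, [:: 7; 15; 3; 12; 7]); (4, [:: 7; 15; 5; 6; 11]); (4, [:: 7; 15; 5; 10; 7]); (4, [:: 13; 15; 3; 6; 7])]);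
  ([:: 7; 15; 9; 6; 11],
   [:: (1, [:: 7; 15; 7; 5; 13]); (2, [:: 7; 15; 7; 3; 14]); (2, [:: 7; 15; 7; 6; 11]); (4, [:: 5; 15; 7; 3; 14]); (4, [:: 5; 15; 7; 6; 11])]);
  ([:: 7; 15; 9; 7; 10],
   [:: (1, [:: 5; 15; 7; 7; 13]); (1, [:: 7; 15; 7; 7; 11]); (2, [:: 3; 15; 7; 7; 14]); (2, [:: 6; 15; 7; 7; 11]); (2, [:: 7; 15; 7; 7; 10]); (4, [:: 5; 15; 7; 7; 10])]);
  ([:: 7; 15; 9; 14; 3],
   [:: (1, [:: 7; 15; 7; 13; 5]); (2, [:: 7; 15; 7; 11; 6]); (2, [:: 7; 15; 7; 14; 3]); (4, [:: 5; 15; 7; 11; 6]); (4, [:: 5; 15; 7; 14; 3])]);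
  ([:: 7; 15; 9; 15; 2],
   [:: (1, [:: 5; 15; 7; 15; 5]); (1, [:: 7; 15; 7; 15; 3]); (2, [:: 3; 15; 7; 15; 6]); (2, [:: 6; 15; 7; 15; 3]); (2, [:: 7; 15; 7; 15; 2]); (4, [:: 5; 15; 7; 15; 2])]);
  ([:: 7; 15; 11; 7; 8],
   [:: (1, [:: 5; 15; 13; 7; 7]); (1, [:: 7; 15; 11; 7; 7]); (1, [:: 7; 15; 13; 3; 9]); (1, [:: 7; 15; 13; 5; 7]); (2, [:: 3; 15; 14; 7; 7]); (2, [:: 6; 15; 11; 7; 7]); (2, [:: 7; 15; 10; 7; 7]); (2, [:: 7; 15; 11; 3; 10]); (2, [:: 7; 15; 11; 6; 7]); (2, [:: 7; 15; 14; 3; 7]); (4, [:: 5; 15; 10; 7; 7]); (4, [:: 5; 15; 11; 6; 7]); (4, [:: 5; 15; 14; 3; 7])]);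
  ([:: 7; 15; 15; 3; 8],
   [:: (1, [:: 5; 15; 15; 5; 7]); (1, [:: 7; 15; 15; 3; 7]); (2, [:: 3; 15; 15; 6; 7]); (2, [:: 6; 15; 15; 3; 7]); (2, [:: 7; 15; 15; 2; 7]); (4, [:: 5; 15; 15; 2; 7])]);
  ([:: 7; 15; 15; 8; 3],
   [:: (1, [:: 7; 15; 15; 5; 5]); (2, [:: 7; 15; 15; 3; 6]); (2, [:: 7; 15; 15; 6; 3]); (4, [:: 5; 15; 15; 3; 6]); (4, [:: 5; 15; 15; 6; 3])]);
  ([:: 7; 15; 15; 9; 2],
   [:: (1, [:: 5; 15; 15; 7; 5]); (1, [:: 7; 15; 15; 7; 3]); (2, [:: 3; 15; 15; 7; 6]); (2, [:: 6; 15; 15; 7; 3]); (2, [:: 7; 15; 15; 7; 2]); (4, [:: 5; 15; 15; 7; 2])]);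
  ([:: 15; 3; 7; 8; 15],
   [:: (1, [:: 15; 3; 7; 7; 15]); (2, [:: 15; 2; 7; 7; 15]); (4, [:: 15; 3; 4; 7; 15])]);
  ([:: 15; 3; 7; 15; 8],
   [:: (1, [:: 15; 3; 7; 15; 7]); (2, [:: 15; 2; 7; 15; 7]); (4, [:: 15; 3; 4; 15; 7])]);
  ([:: 15; 3; 15; 7; 8],
   [:: (1, [:: 15; 3; 15; 7; 7]); (2, [:: 15; 2; 15; 7; 7]); (4, [:: 15; 3; 15; 4; 7])]);
  ([:: 15; 7; 3; 8; 15],
   [:: (1, [:: 15; 5; 5; 7; 15]); (1, [:: 15; 7; 3; 7; 15]); (2, [:: 15; 3; 6; 7; 15]); (2, [:: 15; 6; 3; 7; 15]); (2, [:: 15; 7; 2; 7; 15]); (4, [:: 15; 5; 2; 7; 15])]);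
  ([:: 15; 7; 3; 15; 8],
   [:: (1, [:: 15; 5; 5; 15; 7]); (1, [:: 15; 7; 3; 15; 7]); (2, [:: 15; 3; 6; 15; 7]); (2, [:: 15; 6; 3; 15; 7]); (2, [:: 15; 7; 2; 15; 7]); (4, [:: 15; 5; 2; 15; 7])]);
  ([:: 15; 7; 8; 3; 15],
   [:: (1, [:: 15; 7; 5; 5; 15]); (2, [:: 15; 7; 3; 6; 15]); (2, [:: 15; 7; 6; 3; 15]); (4, [:: 15; 5; 3; 6; 15]); (4, [:: 15; 5; 6; 3; 15])]);
  ([:: 15; 7; 8; 7; 11],
   [:: (1, [:: 15; 7; 5; 7; 13]); (2, [:: 15; 7; 3; 7; 14]); (2, [:: 15; 7; 6; 7; 11]); (4, [:: 15; 5; 3; 7; 14]); (4, [:: 15; 5; 6; 7; 11])]);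
  ([:: 15; 7; 8; 15; 3],
   [:: (1, [:: 15; 7; 5; 15; 5]); (2, [:: 15; 7; 3; 15; 6]); (2, [:: 15; 7; 6; 15; 3]); (4, [:: 15; 5; 3; 15; 6]); (4, [:: 15; 5; 6; 15; 3])]);
  ([:: 15; 7; 9; 2; 15],
   [:: (1, [:: 15; 5; 7; 5; 15]); (1, [:: 15; 7; 7; 3; 15]); (2, [:: 15; 3; 7; 6; 15]); (2, [:: 15; 6; 7; 3; 15]); (2, [:: 15; 7; 7; 2; 15]); (4, [:: 15; 5; 7; 2; 15])]);
  ([:: 15; 7; 9; 3; 14],
   [:: (1, [:: 15; 5; 7; 13; 7]); (1, [:: 15; 7; 7; 5; 13]); (1, [:: 15; 7; 7; 11; 7]); (1, [:: 15; 11; 3; 5; 13]); (2, [:: 15; 3; 7; 14; 7]); (2, [:: 15; 6; 7; 11; 7]); (2, [:: 15; 7; 7; 3; 14]); (2, [:: 15; 7; 7; 6; 11]); (2, [:: 15; 7; 7; 10; 7]); (2, [:: 15; 11; 3; 6; 11]); (2, [:: 15; 11; 3; 10; 7]); (4, [:: 15; 5; 7; 3; 14]); (4, [:: 15; 5; 7; 6; 11]); (4, [:: 15; 5; 7; 10; 7]); (4, [:: 15; 7; 3; 5; 14]); (4, [:: 15; 7; 3; 12; 7]); (4, [:: 15; 7; 5; 6; 11]); (4, [:: 15; 7; 5; 10; 7]); (4, [:: 15; 13; 3; 6; 7])]);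
  ([:: 15; 7; 9; 6; 11],
   [:: (1, [:: 15; 7; 7; 5; 13]); (2, [:: 15; 7; 7; 3; 14]); (2, [:: 15; 7; 7; 6; 11]); (4, [:: 15; 5; 7; 3; 14]); (4, [:: 15; 5; 7; 6; 11])]);
  ([:: 15; 7; 9; 7; 10],
   [:: (1, [:: 15; 5; 7; 7; 13]); (1, [:: 15; 7; 7; 7; 11]); (2, [:: 15; 3; 7; 7; 14]); (2, [:: 15; 6; 7; 7; 11]); (2, [:: 15; 7; 7; 7; 10]); (4, [:: 15; 5; 7; 7; 10])]);
  ([:: 15; 7; 9; 14; 3],
   [:: (1, [:: 15; 7; 7; 13; 5]); (2, [:: 15; 7; 7; 11; 6]); (2, [:: 15; 7; 7; 14; 3]); (4, [:: 15; 5; 7; 11; 6]); (4, [:: 15; 5; 7; 14; 3])]);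
  ([:: 15; 7; 9; 15; 2],
   [:: (1, [:: 15; 5; 7; 15; 5]); (1, [:: 15; 7; 7; 15; 3]); (2, [:: 15; 3; 7; 15; 6]); (2, [:: 15; 6; 7; 15; 3]); (2, [:: 15; 7; 7; 15; 2]); (4, [:: 15; 5; 7; 15; 2])]);
  ([:: 15; 7; 11; 7; 8],
   [:: (1, [:: 15; 5; 13; 7; 7]); (1, [:: 15; 7; 11; 7; 7]); (1, [:: 15; 7; 13; 3; 9]); (1, [:: 15; 7; 13; 5; 7]); (2, [:: 15; 3; 14; 7; 7]); (2, [:: 15; 6; 11; 7; 7]); (2, [:: 15; 7; 10; 7; 7]); (2, [:: 15; 7; 11; 3; 10]); (2, [:: 15; 7; 11; 6; 7]); (2, [:: 15; 7; 14; 3; 7]); (4, [:: 15; 5; 10; 7; 7]); (4, [:: 15; 5; 11; 6; 7]); (4, [:: 15; 5; 14; 3; 7])]);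
  ([:: 15; 7; 15; 3; 8],
   [:: (1, [:: 15; 5; 15; 5; 7]); (1, [:: 15; 7; 15; 3; 7]); (2, [:: 15; 3; 15; 6; 7]); (2, [:: 15; 6; 15; 3; 7]); (2, [:: 15; 7; 15; 2; 7]); (4, [:: 15; 5; 15; 2; 7])]);
  ([:: 15; 7; 15; 8; 3],
   [:: (1, [:: 15; 7; 15; 5; 5]); (2, [:: 15; 7; 15; 3; 6]); (2, [:: 15; 7; 15; 6; 3]); (4, [:: 15; 5; 15; 3; 6]); (4, [:: 15; 5; 15; 6; 3])]);
  ([:: 15; 7; 15; 9; 2],
   [:: (1, [:: 15; 5; 15; 7; 5]); (1, [:: 15; 7; 15; 7; 3]); (2, [:: 15; 3; 15; 7; 6]); (2, [:: 15; 6; 15; 7; 3]); (2, [:: 15; 7; 15; 7; 2]); (4, [:: 15; 5; 15; 7; 2])]);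
  ([:: 15; 15; 3; 7; 8],
   [:: (1, [:: 15; 15; 3; 7; 7]); (2, [:: 15; 15; 2; 7; 7]); (4, [:: 15; 15; 3; 4; 7])]);
  ([:: 15; 15; 7; 3; 8],
   [:: (1, [:: 15; 15; 5; 5; 7]); (1, [:: 15; 15; 7; 3; 7]); (2, [:: 15; 15; 3; 6; 7]); (2, [:: 15; 15; 6; 3; 7]); (2, [:: 15; 15; 7; 2; 7]); (4, [:: 15; 15; 5; 2; 7])]);
  ([:: 15; 15; 7; 8; 3],
   [:: (1, [:: 15; 15; 7; 5; 5]); (2, [:: 15; 15; 7; 3; 6]); (2, [:: 15; 15; 7; 6; 3]); (4, [:: 15; 15; 5; 3; 6]); (4, [:: 15; 15; 5; 6; 3])]);
  ([:: 15; 15; 7; 9; 2],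
   [:: (1, [:: 15; 15; 5; 7; 5]); (1, [:: 15; 15; 7; 7; 3]); (2, [:: 15; 15; 3; 7; 6]); (2, [:: 15; 15; 6; 7; 3]); (2, [:: 15; 15; 7; 7; 2]); (4, [:: 15; 15; 5; 7; 2])])].

Lemma tbl_ok : all (fun e => check e.1 e.2) tbl.
Proof. by vm_compute. Qed.

Lemma inTbl u : u \in map fst tbl -> strictly_inadmissible (tomn u).
Proof.
case/mapP=> [[u' W] h ->] /=; apply: (@checkP _ W); exact: (allP tbl_ok _ h).
Qed.

Definition findS (x a : seq nat) : bool :=
  has (fun s => all (fun k => nth 0 s (nth 0 x k) == nth 0 a k) (iota 0 5)) (map fst tbl).

Definition permcheck (a : seq nat) : bool :=
  all (fun x0 => all (fun x1 => all (fun x2 => all (fun x3 => all (fun x4 =>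
    (uniq [:: x0; x1; x2; x3; x4] && (x0 < x1 < x2)) ==> findS [:: x0; x1; x2; x3; x4] a)
   (iota 0 5)) (iota 0 5)) (iota 0 5)) (iota 0 5)) (iota 0 5).

Lemma permchkP a : permcheck a -> forall p : 'S_5,
  p ord0 < p (inord 1) < p (inord 2) -> strictly_inadmissible (pmono p a).
Proof.
move=> hc p hp.
set x := [seq val (p (inord k)) | k <- iota 0 5].
have m : forall k, val (p (inord k)) \in iota 0 5 by move=> k; rewrite mem_iota ltn_ord.
have ux : uniq x.
  rewrite map_inj_in_uniq ?iota_uniq // => i j; rewrite !mem_iota /= => hi hj.
  move=> e; have e2 := perm.perm_inj (val_inj e); have := congr1 (@nat_of_ord 5) e2; by rewrite !inordK.
have e0 : inord 0 = ord0 :> 'I_5 by apply: ord_inj; rewrite inordK.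
have hx : findS x a.
  move: hc => /allP/(_ _ (m 0)) /allP/(_ _ (m 1)) /allP/(_ _ (m 2)).
  move=> /allP/(_ _ (m 3)) /allP/(_ _ (m 4)) /implyP; apply.
  apply/andP; split; first exact: ux.
  by rewrite e0; exact: hp.
case/hasP: hx => s hs /allP hk.
rewrite (pmonoE (s := s)); first exact: inTbl.
move=> k hk5; apply/eqP.
have := hk k; rewrite mem_iota /= => /(_ hk5).
by rewrite /x (nth_map 0) ?size_iota // nth_iota.
Qed.

Definition wlist : seq (seq nat) := [:: [:: 7; 8; 7; 11]; [:: 7; 9; 3; 14]; [:: 7; 9; 6; 11];
               [:: 7; 9; 7; 10]; [:: 7; 9; 14; 3]; [:: 7; 11; 7; 8]].

Lemma wcheck : all (fun w => (size w == 4) &&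
   all (fun r => (take r w ++ 15 :: drop r w) \in map fst tbl) (iota 0 5)) wlist.
Proof. by vm_compute. Qed.

Theorem lemma3p8 :
  (forall p : 'S_5, (p ord0 < p (inord 1) < p (inord 2))%N ->
     strictly_inadmissible (pmono p [:: 7; 9; 2; 15; 15]%N) /\
     strictly_inadmissible (pmono p [:: 3; 7; 8; 15; 15]%N) /\
     strictly_inadmissible (pmono p [:: 7; 3; 8; 15; 15]%N) /\
     strictly_inadmissible (pmono p [:: 7; 8; 3; 15; 15]%N)) /\
  (forall (r : 'I_5) (w : seq nat),
     w \in [:: [:: 7; 8; 7; 11]; [:: 7; 9; 3; 14]; [:: 7; 9; 6; 11];
               [:: 7; 9; 7; 10]; [:: 7; 9; 14; 3]; [:: 7; 11; 7; 8]]%N ->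
     strictly_inadmissible (xr15_theta r (mono4 w))) /\
  strictly_inadmissible (mono5 [:: 7; 9; 7; 14; 11]%N) /\
  strictly_inadmissible (mono5 [:: 7; 9; 14; 7; 11]%N).
Proof.
split; [|split; [|split]].
- move=> p hp; split; [|split; [|split]]; apply: permchkP hp; by vm_compute.
- move=> r w hw; have /andP[/eqP hs /allP hr] := allP wcheck w hw.
  rewrite xr15E //; apply: inTbl; apply: hr; by rewrite mem_iota ltn_ord.
- apply: (@inTbl [:: 7; 9; 7; 14; 11]); by vm_compute.
- apply: (@inTbl [:: 7; 9; 14; 7; 11]); by vm_compute.
Qed.
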